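(* Let $\sigma\ge 2$, $k\ge 1$, let $U$ be any rotation of a $\sigma$-ary de Bruijn cycle of order $k$, and let $w_{\mathrm{lin}}=U\,U[0..k-2]$. Then the number $r$ of runs of $\operatorname{BWT}(w_{\mathrm{lin}}\$)$ satisfies $r\ge \sigma^{k-1}(\sigma-1)+1$.
   Context: A $\sigma$-ary de Bruijn cycle of order $k$ is a cyclic word of length $\sigma^k$ over an ordered alphabet $\Sigma$ of size $\sigma$ in which every word of $\Sigma^k$ occurs exactly once as a cyclic length-$k$ window. Strings are $0$-indexed. $\$\notin\Sigma$ is an end-marker smaller than all letters, appended once. $\operatorname{BWT}(v)$ is the last column of the matrix whose rows are the cyclic rotations of $v$ sorted lexicographically; a run is a maximal block of one repeated symbol. *)

(* Defs.v *)
From mathcomp Require Import all_boot.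
Set Implicit Arguments. Unset Strict Implicit. Unset Printing Implicit Defensive.

(* After appending the end-marker, symbols are [option nat]:
   [None] is the end-marker $, [Some a] is the letter a. *)

Definition cyc_window (u : seq nat) (k i : nat) : seq nat :=
  [seq nth 0 u ((i + j) %% size u) | j <- iota 0 k].

Definition is_deBruijn (sigma k : nat) (u : seq nat) : Prop :=
  size u = sigma ^ k /\ all (fun a => a < sigma) u /\
  forall w : seq nat, size w = k -> all (fun a => a < sigma) w ->
    count (fun i => cyc_window u k i == w) (iota 0 (size u)) = 1.

Definition sym_lt (x y : option nat) : bool :=
  match x, y with
  | None, Some _ => true
  | Some a, Some b => a < b
  | _, _ => false
  end.

Fixpoint lex_le (s t : seq (option nat)) : bool :=
  match s, t with
  | [::], _ => true
  | _ :: _, [::] => false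
  | x :: s', y :: t' => sym_lt x y || ((x == y) && lex_le s' t')
  end.

Definition bwt_matrix (v : seq (option nat)) : seq (seq (option nat)) :=
  sort lex_le [seq rot i v | i <- iota 0 (size v)].

Definition BWT (v : seq (option nat)) : seq (option nat) :=
  [seq last None row | row <- bwt_matrix v].

Definition runs (s : seq (option nat)) : nat :=
  match s with
  | [::] => 0
  | _ :: s' => 1 + count (fun i => nth None s i != nth None s i.+1)
                         (iota 0 (size s'))
  end.

(* Main.v *)
Require Import Defs.
From mathcomp Require Import all_boot zify.

Fixpoint chg (T : eqType) (s : seq T) : nat :=
  match s with
  | x :: ((y :: _) as s') => (x != y) + chg T s'
  | _ => 0
  end.
Arguments chg {T} s.

Lemma runs_chg (x : option nat) s : runs (x :: s) = 1 + chg (x :: s).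
Proof.
rewrite /runs; congr (1 + _).
elim: s x => [|y s IH] x //.
have -> : chg (x :: y :: s) = (x != y) + chg (y :: s) by [].
rewrite -(IH y) /=; congr (_ + _).
rewrite -[1]/(1+0) iotaDl count_map; apply: eq_count => j /=.
by [].
Qed.

Lemma ar1 a b c d : a <= b + d -> a <= b.+1 + (c + d). Proof. lia. Qed.
Lemma ar2 a b c d : a <= b + d -> a.+1 <= b.+1 + (c + d). Proof. lia. Qed.

Lemma key (A B C : eqType) (le : rel A) (f : A -> C) (g : A -> B) (s : seq A) :
  transitive le ->
  (forall a b c, le a b -> le b c -> f a = f c -> f b = f a) ->
  sorted le s ->
  size (undup [seq (f x, g x) | x <- s]) <= size (undup (map f s)) + chg (map g s).
Proof.
move=> tr cv; elim: s => [|x [|y s] IH] //.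
move=> /andP [lxy st]; have := IH st => {}IH.
have ally : all (le y) s := order_path_min tr st.
set P := [seq (f z, g z) | z <- y :: s] in IH *.
set F := map f (y :: s) in IH *.
have -> : chg [seq g z | z <- [:: x, y & s]] = (g x != g y) + chg [seq g z | z <- y :: s] by [].
have -> : map f [:: x, y & s] = f x :: F by [].
have -> : [seq (f z, g z) | z <- [:: x, y & s]] = (f x, g x) :: P by [].
have uc : forall (T : eqType) (a : T) l, undup (a :: l) = if a \in l then undup l else a :: undup l by [].
rewrite (uc _ (f x, g x) P) (uc _ (f x) F).
have hF : f x \in F -> f y = f x.
  rewrite inE => /orP [/eqP -> // |] /mapP [z zs e].
  exact: (cv x y z lxy (allP ally z zs) e).
have hP : g x = g y -> f y = f x -> (f x, g x) \in P.
  by move=> -> <-; rewrite inE eqxx.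
clearbody P F.
have szc : forall (T : Type) (a : T) l, size (a :: l) = (size l).+1 by [].
have [hf|hf] := boolP (f x \in F).
  have efy := hF hf.
  case: ifP => hp; first by rewrite (leq_trans IH) // leq_add2l leq_addl.
  case: eqP => egy.
    by move: hp; rewrite hP.
  by rewrite szc add1n addnS ltnS.
rewrite szc; case: ifP => hp; rewrite ?szc.
  exact: ar1 IH.
exact: ar2 IH.
Qed.

Lemma sym_lt_irr x : sym_lt x x = false.
Proof. by case: x => //= a; rewrite ltnn. Qed.

Lemma sym_lt_trans (y x z : option nat) : sym_lt x y -> sym_lt y z -> sym_lt x z.
Proof. case: x => [a|]; case: y => [b|]; case: z => [c|] //=; lia. Qed.

Lemma sym_lt_total x y : x != y -> sym_lt x y || sym_lt y x.
Proof.
case: x => [a|]; case: y => [b|] //= h.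
by rewrite -neq_ltn; apply: contra h => /eqP ->.
Qed.

Lemma sym_lt_asym x y : sym_lt x y -> sym_lt y x = false.
Proof. case: x => [a|]; case: y => [b|] //=; lia. Qed.

Lemma lex_trans : transitive lex_le.
Proof.
move=> t s; elim: s t => [|x s IH] [|y t] [|z u] //=.
case/orP => [hxy|/andP [/eqP exy hst]]; case/orP => [hyz|/andP [/eqP eyz htu]].
- by rewrite (sym_lt_trans _ _ _ hxy hyz).
- by rewrite -eyz hxy.
- by rewrite exy hyz.
- by rewrite exy eyz eqxx (IH _ _ hst htu) orbT.
Qed.

Lemma lex_total : total lex_le.
Proof.
move=> s; elim: s => [|x s IH] [|y t] //=.
case: (eqVneq x y) => [->|nxy].
  by rewrite sym_lt_irr /= IH.
by case/orP: (sym_lt_total _ _ nxy) => ->; rewrite ?orbT.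
Qed.

Lemma lex_take m a b c : lex_le a b -> lex_le b c -> take m a = take m c ->
  take m b = take m a.
Proof.
elim: m a b c => [|m IH] a b c; first by rewrite !take0.
case: a => [|x a]; case: c => [|z c] //=.
  by case: b.
case: b => [|y b] //= h1 h2 [ezx etc]; subst z.
case/orP: h1 => [hxy|/andP [/eqP exy hab]].
  case/orP: h2 => [hyx|/andP [/eqP eyx _]].
    by rewrite (sym_lt_asym _ _ hxy) in hyx.
  by rewrite eyx sym_lt_irr in hxy.
subst y; case/orP: h2 => [|/andP [_ hbc]]; first by rewrite sym_lt_irr.
by rewrite (IH a b c hab hbc etc).
Qed.

Lemma size_undup_eqi (T : eqType) (s1 s2 : seq T) : s1 =i s2 -> size (undup s1) = size (undup s2).
Proof.
move=> e; apply: perm_size; apply: uniq_perm; rewrite ?undup_uniq // => x.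
by rewrite !mem_undup e.
Qed.

Lemma undup_map_le (T1 T2 : eqType) (h : T1 -> T2) s : size (undup (map h s)) <= size (undup s).
Proof.
rewrite (@size_undup_eqi _ _ (map h (undup s))).
  by rewrite (leq_trans (size_undup _)) // size_map.
move=> y; apply/mapP/mapP => [[x xs ->]|[x xs ->]]; exists x => //.
  by rewrite mem_undup.
by rewrite -mem_undup.
Qed.

Lemma split_undup (T : eqType) (p : pred T) s :
  size (undup s) = size (undup (filter p s)) + size (undup (filter (predC p) s)).
Proof. by rewrite -!filter_undup !size_filter count_predC. Qed.

Definition valid (sg : nat) (c : seq (option nat)) :=
  all (fun x => if x is Some a then a < sg else false) c.

Fixpoint enc (sg : nat) (c : seq (option nat)) : nat :=
  match c with
  | [::] => 0
  | x :: c' => odflt 0 x + sg * enc sg c'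
  end.

Lemma enc_lt sg c : valid sg c -> enc sg c < sg ^ size c.
Proof.
elim: c => [|[a|] c IH] //=; move=> /andP [ha hc]; have := IH hc.
rewrite expnS; nia.
Qed.

Lemma enc_inj sg c1 c2 : valid sg c1 -> valid sg c2 -> size c1 = size c2 ->
  enc sg c1 = enc sg c2 -> c1 = c2.
Proof.
elim: c1 c2 => [|[a|] c1 IH] [|[b|] c2] //= /andP [ha h1] /andP [hb h2] [es] e.
have e12 : enc sg c1 = enc sg c2.
  case: (ltngtP (enc sg c1) (enc sg c2)) => // h; nia.
by rewrite (IH c2 h1 h2 es e12); congr (Some _ :: _); lia.
Qed.

Lemma words_bound sg m (s : seq (seq (option nat))) :
  {in s, forall c, size c = m /\ valid sg c} -> size (undup s) <= sg ^ m.
Proof.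
move=> hs.
have hu : {in undup s, forall c, size c = m /\ valid sg c}.
  by move=> c; rewrite mem_undup; apply: hs.
rewrite -(size_map (enc sg)) -(size_iota 0 (sg ^ m)).
apply: uniq_leq_size.
  rewrite map_inj_in_uniq ?undup_uniq // => c1 c2 h1 h2.
  have [s1 v1] := hu c1 h1; have [s2 v2] := hu c2 h2.
  by apply: enc_inj => //; rewrite s1 s2.
move=> _ /mapP [c hc ->]; have [s1 v1] := hu c hc.
by rewrite mem_iota /= -s1 enc_lt.
Qed.

Lemma drop_catl (T : Type) j (s1 s2 : seq T) : j <= size s1 -> drop j (s1 ++ s2) = drop j s1 ++ s2.
Proof.
move=> h; rewrite drop_cat; case: ltnP => h2 //.
have -> : j = size s1 by apply/eqP; rewrite eqn_leq h h2.
by rewrite subnn drop0 drop_size.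
Qed.

Lemma take_catl (T : Type) m (s1 s2 : seq T) : m <= size s1 -> take m (s1 ++ s2) = take m s1.
Proof.
move=> h; rewrite take_cat; case: ltnP => h2 //.
have -> : m = size s1 by apply/eqP; rewrite eqn_leq h h2.
by rewrite subnn take0 cats0 take_size.
Qed.

Lemma pr_rot (w : seq nat) m j : 0 < j -> j + m <= size w ->
  (take m (rot j (rcons (map Some w) None)), last None (rot j (rcons (map Some w) None)))
  = (map Some (take m (drop j w)), Some (nth 0 w j.-1)).
Proof.
move=> j0 hj; rewrite /rot -cats1.
have hjw : j <= size (map Some w) by rewrite size_map; lia.
rewrite drop_catl // -catA (@take_catl _ m (drop j (map Some w))); last by rewrite size_drop size_map; lia.
rewrite (@take_catl _ j (map Some w)) // last_cat -map_drop; congr (_, _); first by rewrite map_take.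
rewrite cat1s [last _ (None :: _)]/= -nth_last size_take size_map.
have -> : (if j < size w then j else size w) = j by case: ltnP => //; lia.
rewrite nth_take; last lia.
by rewrite (nth_map 0) //; lia.
Qed.

Lemma take_drop_nth (s : seq nat) t k : t + k <= size s ->
  take k (drop t s) = [seq nth 0 s (t + l) | l <- iota 0 k].
Proof.
move=> h; apply: (@eq_from_nth _ 0).
  by rewrite size_take size_drop size_map size_iota; case: ltnP; lia.
move=> l; rewrite size_take size_drop => hl.
have hlk : l < k by move: hl; case: (ltnP k (size s - t)); lia.
by rewrite nth_take // nth_drop (nth_map 0) ?size_iota // nth_iota.
Qed.

Lemma count2 (T : eqType) (p : pred T) s a b : a != b -> a \in s -> b \in s -> p a -> p b ->
  2 <= count p s.
Proof.
move=> ab ha hb pa pb; rewrite -size_filter.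
have -> : 2 = size [:: a; b] by [].
apply: uniq_leq_size; first by rewrite /= inE ab.
by move=> x; rewrite !inE mem_filter => /orP [] /eqP ->; rewrite ?pa ?pb.
Qed.

Lemma nth_rot' (D : seq nat) i x : i <= size D -> x < size D ->
  nth 0 (rot i D) x = nth 0 D ((x + i) %% size D).
Proof.
move=> hi hx; rewrite /rot nth_cat size_drop; case: ltnP => h.
  by rewrite nth_drop modn_small; [congr nth; lia| lia].
rewrite nth_take; last lia.
have -> : x + i = (x - (size D - i)) + size D by lia.
by rewrite modnDr modn_small //; lia.
Qed.

Lemma take_cons_pred (T : Type) k (a : T) l : 0 < k -> take k (a :: l) = a :: take (k - 1) l.
Proof. by case: k => // n _; rewrite subSS subn0. Qed.


Theorem lemma6 (sigma k : nat) (D U : seq nat) (i : nat) :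
  2 <= sigma -> 1 <= k ->
  is_deBruijn sigma k D ->
  U = rot i D ->
  let w_lin := U ++ take (k - 1) U in
  sigma ^ (k - 1) * (sigma - 1) + 1 <= runs (BWT (rcons (map Some w_lin) None)).
Proof.
move=> hs hk [hN [hall hcnt]] {U}->; cbv zeta.
set U := rot i D.
set w := U ++ take (k - 1) U.
set v := rcons (map Some w) None.
set N := size D.
have N0 : 0 < N by rewrite /N hN expn_gt0; lia.
have kN : k <= N by rewrite /N hN; apply: ltnW; apply: ltn_expl.
have sU : size U = N by rewrite size_rot.
have sw : size w = N + (k - 1) by rewrite size_cat size_take sU; case: ltnP; lia.
have [i' [hi' eU]] : exists i', i' <= N /\ U = rot i' D.
  case: (ltnP i N) => h; [exists i | exists 0]; split => //; first by lia.
  by rewrite /U rot_oversize // rot0.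
have nthw : forall x, x < N + (k - 1) -> nth 0 w x = nth 0 D ((x + i') %% N).
  move=> x hx; rewrite nth_cat sU; case: ltnP => h.
    by rewrite eU nth_rot'.
  rewrite nth_take; last lia.
  rewrite eU nth_rot' //; last lia.
  have -> : x + i' = (x - N + i') + N by lia.
  by rewrite modnDr.
have win : forall t1 t2, t1 < N -> t2 < N -> take k (drop t1 w) = take k (drop t2 w) -> t1 = t2.
  have wc : forall t, t < N -> take k (drop t w) = cyc_window D k ((t + i') %% N).
    move=> t ht; rewrite take_drop_nth; last lia.
    rewrite /cyc_window -/N; apply/eq_in_map => l; rewrite mem_iota /= => hl.
    rewrite nthw; last lia.
    by rewrite modnDml addnAC.
  move=> t1 t2 h1 h2; rewrite !wc // => e.
  have : (t1 + i') %% N = (t2 + i') %% N.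
    apply/eqP; apply/negPn/negP => ne.
    set W := cyc_window D k ((t1 + i') %% N).
    have hW : count (fun s => cyc_window D k s == W) (iota 0 N) = 1.
      apply: hcnt; first by rewrite size_map size_iota.
      apply/allP => _ /mapP [l _ ->]; apply: (allP hall); apply: mem_nth.
      by rewrite -/N ltn_pmod.
    have := @count2 _ (fun s => cyc_window D k s == W) (iota 0 N) _ _ ne.
    rewrite !mem_iota /= !ltn_pmod // hW -e eqxx => /(_ isT isT isT isT).
    by [].
  move/eqP; rewrite eqn_modDr => /eqP; rewrite !modn_small //.
have sv : size v = N + (k - 1) + 1 by rewrite size_rcons size_map sw addn1.
set pr := fun r : seq (option nat) => (take (k - 1) r, last None r).
set R := [seq rot j v | j <- iota 0 (size v)].
set gd := fun c : seq (option nat) => None \notin c.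
have prj : forall j, 0 < j <= N ->
    pr (rot j v) = (map Some (take (k - 1) (drop j w)), Some (nth 0 w j.-1)).
  move=> j /andP [j0 jN]; apply: pr_rot => //; lia.
have hwin : forall j, 0 < j <= N -> take k (drop j.-1 w) = nth 0 w j.-1 :: take (k - 1) (drop j w).
  move=> j /andP [j0 jN]; rewrite (drop_nth 0); last lia.
  by rewrite prednK // take_cons_pred.
have good_pairs : N <= size (undup (filter (preim fst gd) (map pr R))).
  rewrite -{1}(size_iota 1 N) -(size_map (fun j => pr (rot j v))).
  apply: uniq_leq_size.
    rewrite map_inj_in_uniq ?iota_uniq // => j1 j2; rewrite !mem_iota => h1 h2.
    rewrite !prj; [|lia|lia] => -[e1 e2].
    have e1' := inj_map Some_inj e1.
    have : take k (drop j1.-1 w) = take k (drop j2.-1 w).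
      by rewrite !hwin ?e1' ?e2 //; lia.
    move/win; lia.
  move=> _ /mapP [j hj ->]; rewrite mem_undup mem_filter; apply/andP; split.
    rewrite /preim prj; last by move: hj; rewrite mem_iota; lia.
    by rewrite /gd /=; apply/mapP => -[a _].
  apply: map_f; apply: map_f; rewrite mem_iota; move: hj; rewrite mem_iota; lia.
have good_pref : size (undup (filter gd (map (take (k - 1)) R))) <= sigma ^ (k - 1).
  apply: words_bound => c; rewrite mem_filter => /andP [hg hc].
  move: hc hg => /mapP [r /mapP [j hj ->] ->] hg.
  split.
    rewrite size_take size_rot sv; case: ltnP; lia.
  apply/allP => x hx; have xv : x \in v by move: hx => /mem_take; rewrite mem_rot.
  case: x hx xv => [a|] hx xv; last by move: hg; rewrite /gd /= hx.
  move: xv; rewrite /v mem_rcons inE /= => /mapP [b hb [->]].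
  apply: (allP hall); move: hb; rewrite /w mem_cat => /orP [|/mem_take]; by rewrite /U mem_rot.
have pM : perm_eq (sort lex_le R) R by rewrite perm_sort perm_refl.
have hkey := key _ _ _ lex_le (take (k - 1)) (last None) (sort lex_le R) lex_trans
  (fun a b c => @lex_take (k - 1) a b c) (sort_sorted lex_total R).
have e1 : size (undup [seq (take (k - 1) x, last None x) | x <- sort lex_le R])
    = size (undup (map pr R)).
  by apply: size_undup_eqi; apply: perm_mem; apply: perm_map.
have e2 : size (undup (map (take (k - 1)) (sort lex_le R))) = size (undup (map (take (k - 1)) R)).
  by apply: size_undup_eqi; apply: perm_mem; apply: perm_map.
rewrite e1 e2 (split_undup _ (preim fst gd)) (split_undup _ gd) in hkey.
have bad : size (undup (filter (predC gd) (map (take (k - 1)) R)))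
    <= size (undup (filter (predC (preim fst gd)) (map pr R))).
  have -> : map (take (k - 1)) R = map fst (map pr R) by rewrite -map_comp.
  rewrite filter_map; exact: undup_map_le.
have pw : sigma ^ k = sigma ^ (k - 1) * sigma by rewrite -expnSr; congr (_ ^ _); lia.
rewrite /BWT /bwt_matrix -/R.
case E: (sort lex_le R) hkey => [|x s] hkey.
  by have := size_sort lex_le R; rewrite E size_map size_iota sv addn1.
rewrite [map _ (_ :: _)]/= runs_chg.
move: hkey good_pairs good_pref bad; have hN2 : N = sigma ^ k := hN.
rewrite hN2 pw mulnBr muln1.
set P := sigma ^ (k - 1) * sigma.
set Q := sigma ^ (k - 1).
set C := chg _.
move=> h1 h2 h3 h4.
set a1 := size (undup (filter (preim fst gd) (map pr R))) in h1 h2 *.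
set a2 := size (undup (filter (predC (preim fst gd)) (map pr R))) in h1 h4 *.
set a3 := size (undup (filter gd (map (take (k - 1)) R))) in h1 h3 *.
set a4 := size (undup (filter (predC gd) (map (take (k - 1)) R))) in h1 h4 *.
clearbody a1 a2 a3 a4 P Q C. lia.
Qed.
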